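(* Let $L$ be an $\omega$-regular language over $\Sigma$, let $M=(\Sigma,Q,q_0,\delta)$ be a complete DFA, and let $u\in\Sigma^*$. Define the relation $\approx^u_{R'}$ on $\Sigma^*$ by $x\approx^u_{R'}y$ iff for every $v\in\Sigma^*$, $\big(M(uxv)=M(u)\wedge u(xv)^\omega\in L\big)\Leftrightarrow\big(M(uyv)=M(u)\wedge u(yv)^\omega\in L\big)$. Then the index of $\approx^u_{R'}$ is bounded by $|Q|\cdot|\approx^u_P|$, where $|\approx^u_P|$ is the index of $\approx^u_P$.
   Context: For a complete DFA $M$ and finite word $w$, $M(w)$ is the state reached from the initial state on $w$. The relation $\approx^u_P$ on $\Sigma^*$ is defined by $x\approx^u_P y$ iff for all $v\in\Sigma^*$, $u(xv)^\omega\in L\Leftrightarrow u(yv)^\omega\in L$. The index of an equivalence relation is its number of equivalence classes. *)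

(* Defs.v *)
From mathcomp Require Import all_boot.
Set Implicit Arguments. Unset Strict Implicit. Unset Printing Implicit Defensive.

Definition oword (Sigma : Type) := nat -> Sigma.

Record DFA (Sigma Q : finType) := { d_init : Q; d_trans : Q -> Sigma -> Q }.

Definition run_dfa (Sigma Q : finType) (M : DFA Sigma Q) (w : seq Sigma) : Q :=
  foldl (d_trans M) (d_init M) w.

Record NBA (Sigma S : finType) := {
  b_init : S -> bool;
  b_trans : S -> Sigma -> S -> bool;
  b_acc : S -> bool }.

Definition nba_accepts (Sigma S : finType) (A : NBA Sigma S) (w : oword Sigma) : Prop :=
  exists r : nat -> S,
    b_init A (r 0) /\ (forall i, b_trans A (r i) (w i) (r i.+1)) /\
    (forall n, exists i, n <= i /\ b_acc A (r i)).

Definition omega_regular (Sigma : finType) (L : oword Sigma -> Prop) : Prop :=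
  exists (S : finType) (A : NBA Sigma S), forall w, L w <-> nba_accepts A w.

(* The omega-word u v^omega, for v nonempty. *)
Definition uvw (Sigma : Type) (x0 : Sigma) (u v : seq Sigma) : oword Sigma :=
  fun i => if i < size u then nth x0 u i else nth x0 v ((i - size u) %% size v).

(* "u v^omega \in L"; v^omega is only an omega-word when v is nonempty,
   so the membership is taken to be false for v = [::]. *)
Definition in_L_uvw (Sigma : finType) (L : oword Sigma -> Prop) (u v : seq Sigma) : Prop :=
  match v with
  | [::] => False
  | x0 :: _ => L (uvw x0 u v)
  end.

Definition approxP (Sigma : finType) (L : oword Sigma -> Prop) (u x y : seq Sigma) : Prop :=
  forall v : seq Sigma, in_L_uvw L u (x ++ v) <-> in_L_uvw L u (y ++ v).

Definition approxR' (Sigma Q : finType) (L : oword Sigma -> Prop) (M : DFA Sigma Q)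
    (u x y : seq Sigma) : Prop :=
  forall v : seq Sigma,
    (run_dfa M (u ++ x ++ v) = run_dfa M u /\ in_L_uvw L u (x ++ v)) <->
    (run_dfa M (u ++ y ++ v) = run_dfa M u /\ in_L_uvw L u (y ++ v)).

Definition has_index (Sigma : finType) (E : seq Sigma -> seq Sigma -> Prop) (n : nat) : Prop :=
  exists reps : seq (seq Sigma),
    size reps = n /\
    (forall w, exists2 r, r \in reps & E w r) /\
    (forall i j, i < n -> j < n -> i <> j -> ~ E (nth [::] reps i) (nth [::] reps j)).

(* Main.v *)
Require Import Defs.
From mathcomp Require Import all_boot.
From Stdlib Require Import Classical ClassicalEpsilon.

Section Helpers.
Variable Sigma : finType.

Definition pickw (P : seq Sigma -> Prop) : seq Sigma :=
  match excluded_middle_informative (exists w, P w) with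
  | left h => proj1_sig (constructive_indefinite_description _ h)
  | right _ => [::]
  end.

Lemma pickwP P : (exists w, P w) -> P (pickw P).
Proof.
move=> h; rewrite /pickw; case: excluded_middle_informative => [h'|//].
exact: proj2_sig (constructive_indefinite_description _ h').
Qed.

Lemma reduce (E : seq Sigma -> seq Sigma -> Prop)
  (Erefl : forall x, E x x) (Esym : forall x y, E x y -> E y x)
  (s : seq (seq Sigma)) :
  exists reps : seq (seq Sigma), size reps <= size s /\
    (forall w, w \in s -> exists2 r, r \in reps & E w r) /\
    (forall i j, i < size reps -> j < size reps -> i <> j ->
       ~ E (nth [::] reps i) (nth [::] reps j)).
Proof.
elim: s => [|a s [reps [hs [hc hd]]]].
  by exists [::]; split => //; split => // w.
have [[r rin Ear]|hn] := classic (exists2 r, r \in reps & E a r).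
  exists reps; split; first by apply: leq_trans hs _.
  split => // w; rewrite in_cons => /orP [/eqP ->|ws]; first by exists r.
  exact: hc.
exists (a :: reps); split; first by [].
split.
  move=> w; rewrite in_cons => /orP [/eqP ->|ws]; first by exists a; rewrite ?mem_head.
  by have [r rin Ewr] := hc w ws; exists r => //; rewrite in_cons rin orbT.
case=> [|i] [|j] //= hi hj hij.
- by move=> h; apply: hn; exists (nth [::] reps j) => //; apply: mem_nth.
- by move=> h; apply: hn; exists (nth [::] reps i) => //; [apply: mem_nth|apply: Esym].
- by apply: hd => // e; apply: hij; rewrite e.
Qed.
End Helpers.

Lemma run_cat (Sigma Q : finType) (M : DFA Sigma Q) u x v :
  run_dfa M (u ++ x ++ v) = foldl (d_trans M) (run_dfa M (u ++ x)) v.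
Proof. by rewrite /run_dfa catA foldl_cat. Qed.

Theorem lemma12 (Sigma Q : finType) (L : oword Sigma -> Prop) (M : DFA Sigma Q)
    (u : seq Sigma) (nP : nat) :
  omega_regular L ->
  has_index (approxP L u) nP ->
  exists nR, has_index (approxR' L M u) nR /\ nR <= #|Q| * nP.
Proof.
move=> _ [pr [hsz [hcov _]]].
pose f (q : Q) (i : nat) := @pickw Sigma (fun w => run_dfa M (u ++ w) = q /\
                                   approxP L u w (nth [::] pr i)).
pose s := [seq f q i | q <- enum Q, i <- iota 0 nP].
have Erefl : forall x, approxR' L M u x x by move=> x v.
have Esym : forall x y, approxR' L M u x y -> approxR' L M u y x.
  by move=> x y h v; split => /h.
have Etr : forall x y z, approxR' L M u x y -> approxR' L M u y z ->
    approxR' L M u x z.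
  by move=> x y z h1 h2 v; split => [/h1/h2|/h2/h1].
have scov : forall w, exists2 t, t \in s & approxR' L M u w t.
  move=> w; have [r rin Pwr] := hcov w.
  pose i := index r pr; pose q := run_dfa M (u ++ w).
  have hi : i < nP by rewrite -hsz index_mem.
  have nr : nth [::] pr i = r by rewrite nth_index.
  have [h1 h2] : run_dfa M (u ++ f q i) = q /\ approxP L u (f q i) (nth [::] pr i).
    by apply: (@pickwP Sigma (fun w => run_dfa M (u ++ w) = q /\ approxP L u w (nth [::] pr i))); exists w; rewrite nr.
  exists (f q i).
    by apply: allpairs_f; [rewrite mem_enum | rewrite mem_iota].
  move: h2; rewrite nr => h2 v; rewrite !run_cat h1.
  split => -[-> h]; split => //.
    by apply/h2/Pwr.
  by apply/Pwr/h2.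
have [reps [hs [hc hd]]] := @reduce Sigma _ Erefl Esym s.
exists (size reps); split.
  exists reps; split => //; split => // w.
  have [t tin Ewt] := scov w; have [r rin Etr'] := hc t tin.
  by exists r => //; apply: Etr Ewt Etr'.
by move: hs; rewrite size_allpairs size_iota -cardE.
Qed.
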